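(* Let $\Gamma$ be a group and $S$ a $\Gamma$-graded inverse semigroup. Then there exist a nonempty set $X$ with a map $\deg:X\to\Gamma$ and an injective semigroup homomorphism $\psi:S\to\mathcal{I}^{\mathrm{gr}}(X)$ with $\psi(S_\alpha)\subseteq\mathcal{I}(X)_\alpha$ for all $\alpha\in\Gamma$.
   Context: Semigroups have a zero; $S$ is $\Gamma$-graded via $\deg:S\setminus\{0\}\to\Gamma$ with $\deg(st)=\deg(s)\deg(t)$ when $st\neq0$, $S_\alpha=\deg^{-1}(\alpha)\cup\{0\}$. For a set $X$, $\mathcal I(X)$ is the symmetric inverse monoid: bijections $\phi:A\to B$ between subsets of $X$, with $\mathrm{Dom}(\phi)=A$, composed as partial maps (the composite $\phi\psi$ has domain $\psi^{-1}(\mathrm{Im}\,\psi\cap\mathrm{Dom}\,\phi)$), with the empty map as zero. For $X$ with $\deg:X\to\Gamma$ put $X_\alpha=\deg^{-1}(\alpha)$ and, for $A\subseteq X$, $A_\alpha=A\cap X_\alpha$. Define $\mathcal I(X)_\alpha=\{\phi\in\mathcal I(X):\phi(\mathrm{Dom}(\phi)_\beta)\subseteq X_{\alpha\beta}\text{ for all }\beta\in\Gamma\}$ and $\mathcal I^{\mathrm{gr}}(X)=\bigcup_{\alpha\in\Gamma}\mathcal I(X)_\alpha$; this is a $\Gamma$-graded inverse subsemigroup of $\mathcal I(X)$ with components $\mathcal I(X)_\alpha$. *)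

(* Defs.v *)
Set Implicit Arguments.
Unset Strict Implicit.

Definition is_group (G : Type) (op : G -> G -> G) (e : G) (inv : G -> G) : Prop :=
  (forall a b c, op a (op b c) = op (op a b) c) /\
  (forall a, op e a = a /\ op a e = a) /\
  (forall a, op (inv a) a = e /\ op a (inv a) = e).

Definition is_semigroup_with_zero (S : Type) (mul : S -> S -> S) (z : S) : Prop :=
  (forall a b c, mul a (mul b c) = mul (mul a b) c) /\
  (forall a, mul z a = z /\ mul a z = z).

Definition is_inverse_semigroup (S : Type) (mul : S -> S -> S) (z : S) : Prop :=
  is_semigroup_with_zero mul z /\
  (forall s, exists t, (mul (mul s t) s = s /\ mul (mul t s) t = t) /\
     forall t', mul (mul s t') s = s /\ mul (mul t' s) t' = t' -> t' = t).

(* Gamma-grading: degS is only meaningful on S \ {0} (its value at z is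
   irrelevant); deg(st) = deg(s)deg(t) whenever st <> 0. *)
Definition is_graded (G S : Type) (op : G -> G -> G) (mul : S -> S -> S) (z : S)
  (degS : S -> G) : Prop :=
  forall s t, mul s t <> z -> s <> z -> t <> z ->
    degS (mul s t) = op (degS s) (degS t).

Definition in_component (G S : Type) (z : S) (degS : S -> G) (a : G) (s : S) : Prop :=
  s = z \/ (s <> z /\ degS s = a).

(* Elements of the symmetric inverse monoid I(X): partial injections,
   encoded as X -> option X (None = undefined); the empty map is fun _ => None. *)
Definition partial_injection (X : Type) (f : X -> option X) : Prop :=
  forall x x' y, f x = Some y -> f x' = Some y -> x = x'.

Definition pcomp (X : Type) (f g : X -> option X) : X -> option X :=
  fun x => match g x with Some y => f y | None => None end.

Definition in_graded_component (G X : Type) (op : G -> G -> G) (degX : X -> G)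
  (a : G) (f : X -> option X) : Prop :=
  partial_injection f /\ forall x y, f x = Some y -> degX y = op a (degX x).

Definition in_Igr (G X : Type) (op : G -> G -> G) (degX : X -> G)
  (f : X -> option X) : Prop :=
  exists a, in_graded_component op degX a f.

(* Main.v *)
Require Import Defs.
From Stdlib Require Import IndefiniteDescription FunctionalExtensionality ClassicalEpsilon.

Lemma idem_mul (S : Type) (mul : S -> S -> S) (iv : S -> S)
  (HA : forall a b c, mul a (mul b c) = mul (mul a b) c)
  (R1 : forall s, mul s (mul (iv s) s) = s)
  (R2 : forall s, mul (iv s) (mul s (iv s)) = iv s)
  (U : forall s t', mul s (mul t' s) = s -> mul t' (mul s t') = t' -> t' = iv s)
  (e f : S) (He : mul e e = e) (Hf : mul f f = f) : mul (mul e f) (mul e f) = mul e f.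
Proof.
  assert (He' : forall X, mul e (mul e X) = mul e X) by (intro X; rewrite HA, He; auto).
  assert (Hf' : forall X, mul f (mul f X) = mul f X) by (intro X; rewrite HA, Hf; auto).
  assert (Idem : forall x, mul x x = x -> iv x = x).
  { intros x Hx. symmetry. apply U; rewrite Hx; auto. }
  set (a := iv (mul e f)).
  assert (A1 : mul e (mul f (mul a (mul e f))) = mul e f).
  { rewrite HA. apply R1. }
  assert (A2 : forall X, mul a (mul e (mul f (mul a X))) = mul a X).
  { intro X. transitivity (mul (mul a (mul (mul e f) a)) X). rewrite <- !HA; reflexivity. unfold a; rewrite R2; reflexivity. }
  assert (A1' : forall X, mul e (mul f (mul a (mul e (mul f X)))) = mul e (mul f X)).
  { intro X. transitivity (mul (mul e (mul f (mul a (mul e f)))) X). rewrite <- !HA; reflexivity. rewrite A1, HA; reflexivity. }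
  assert (Hfae : mul f (mul a e) = a).
  { unfold a at 2. apply U.
    - rewrite <- !HA. rewrite ?Hf', ?He'. exact A1.
    - rewrite <- !HA. rewrite Hf'. rewrite He'. rewrite A2. reflexivity. }
  assert (Ha : mul a a = a).
  { transitivity (mul (mul f (mul a e)) (mul f (mul a e))). rewrite Hfae; auto.
    rewrite <- !HA. rewrite A2. exact Hfae. }
  assert (Hef : mul e f = a).
  { transitivity (iv a); [|apply Idem; auto]. apply U.
    - unfold a. rewrite R2. reflexivity.
    - unfold a. rewrite R1. reflexivity. }
  rewrite Hef. exact Ha.
Qed.

Lemma idem_comm (S : Type) (mul : S -> S -> S) (iv : S -> S)
  (HA : forall a b c, mul a (mul b c) = mul (mul a b) c)
  (R1 : forall s, mul s (mul (iv s) s) = s)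
  (R2 : forall s, mul (iv s) (mul s (iv s)) = iv s)
  (U : forall s t', mul s (mul t' s) = s -> mul t' (mul s t') = t' -> t' = iv s)
  (e f : S) (He : mul e e = e) (Hf : mul f f = f) : mul e f = mul f e.
Proof.
  assert (He' : forall X, mul e (mul e X) = mul e X) by (intro X; rewrite HA, He; auto).
  assert (Hf' : forall X, mul f (mul f X) = mul f X) by (intro X; rewrite HA, Hf; auto).
  assert (Idem : forall x, mul x x = x -> iv x = x).
  { intros x Hx. symmetry. apply U; rewrite Hx; auto. }
  pose proof (idem_mul _ _ _ HA R1 R2 U _ _ He Hf) as I1.
  pose proof (idem_mul _ _ _ HA R1 R2 U _ _ Hf He) as I2.
  rewrite <- !HA in I1, I2.
  transitivity (iv (mul e f)); [symmetry; apply Idem; rewrite <- !HA; exact I1|].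
  symmetry. apply U; rewrite <- !HA; rewrite ?Hf', ?He'; assumption.
Qed.

Lemma idem_commN (S : Type) (mul : S -> S -> S) (iv : S -> S)
  (HA : forall a b c, mul a (mul b c) = mul (mul a b) c)
  (R1 : forall s, mul s (mul (iv s) s) = s)
  (R2 : forall s, mul (iv s) (mul s (iv s)) = iv s)
  (U : forall s t', mul s (mul t' s) = s -> mul t' (mul s t') = t' -> t' = iv s)
  (a b c d : S) (He : mul (mul a b) (mul a b) = mul a b) (Hf : mul (mul c d) (mul c d) = mul c d) :
  forall X, mul a (mul b (mul c (mul d X))) = mul c (mul d (mul a (mul b X))).
Proof.
  intro X. pose proof (idem_comm _ _ _ HA R1 R2 U _ _ He Hf) as C.
  transitivity (mul (mul (mul a b) (mul c d)) X); [rewrite <- !HA; reflexivity|].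
  rewrite C. rewrite <- !HA. reflexivity.
Qed.

Theorem proposition5p4
  (G : Type) (op : G -> G -> G) (e : G) (inv : G -> G)
  (HG : is_group op e inv)
  (S : Type) (mul : S -> S -> S) (z : S)
  (HS : is_inverse_semigroup mul z)
  (degS : S -> G) (Hdeg : is_graded op mul z degS) :
  exists (X : Type) (degX : X -> G) (psi : S -> X -> option X),
    inhabited X /\
    (forall s, in_Igr op degX (psi s)) /\
    (forall s t, psi (mul s t) = pcomp (psi s) (psi t)) /\
    (forall s t, psi s = psi t -> s = t) /\
    (forall a s, in_component z degS a s -> in_graded_component op degX a (psi s)).
Proof.
  destruct HS as [[HA HZ] HI].
  destruct (functional_choice _ HI) as [iv Hiv].
  assert (R1 : forall s, mul s (mul (iv s) s) = s).
  { intro s. destruct (Hiv s) as [[H1 _] _]. rewrite HA. exact H1. }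
  assert (R2 : forall s, mul (iv s) (mul s (iv s)) = iv s).
  { intro s. destruct (Hiv s) as [[_ H2] _]. rewrite HA. exact H2. }
  assert (U : forall s t', mul s (mul t' s) = s -> mul t' (mul s t') = t' -> t' = iv s).
  { intros s t' H1 H2. destruct (Hiv s) as [_ H]. apply H. rewrite <- !HA. auto. }
  assert (R1X : forall s X, mul s (mul (iv s) (mul s X)) = mul s X).
  { intros s X. rewrite (HA (iv s)), HA, R1. reflexivity. }
  assert (R2X : forall s X, mul (iv s) (mul s (mul (iv s) X)) = mul (iv s) X).
  { intros s X. rewrite (HA s), HA, R2. reflexivity. }
  assert (P1 : forall s, mul (mul (iv s) s) (mul (iv s) s) = mul (iv s) s).
  { intro s. rewrite <- !HA. rewrite R2X. reflexivity. }
  assert (P2 : forall s, mul (mul s (iv s)) (mul s (iv s)) = mul s (iv s)).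
  { intro s. rewrite <- !HA. rewrite R1X. reflexivity. }
  pose proof (idem_commN _ _ _ HA R1 R2 U) as CN.
  assert (ivmul : forall s t, iv (mul s t) = mul (iv t) (iv s)).
  { intros s t. symmetry; apply U; rewrite <- !HA.
    - rewrite (CN t (iv t) (iv s) s (P2 t) (P1 s)). rewrite R1X, R1. reflexivity.
    - rewrite (CN (iv s) s t (iv t) (P1 s) (P2 t)). rewrite R2X, R2. reflexivity. }
  assert (nz : forall s x, mul (iv s) (mul s x) = x -> x <> z -> mul s x <> z).
  { intros s x H1 H2 H3. rewrite H3, (proj2 (HZ (iv s))) in H1. auto. }
  pose (psi := fun s x => if excluded_middle_informative (mul (iv s) (mul s x) = x /\ x <> z)
                          then Some (mul s x) else None).
  assert (Psome : forall s x, mul (iv s) (mul s x) = x -> x <> z -> psi s x = Some (mul s x)).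
  { intros s x H1 H2. unfold psi. destruct (excluded_middle_informative _) as [|n]; auto.
    exfalso; auto. }
  assert (Pnone : forall s x, ~ (mul (iv s) (mul s x) = x /\ x <> z) -> psi s x = None).
  { intros s x H. unfold psi. destruct (excluded_middle_informative _); tauto. }
  assert (Pinv : forall s x y, psi s x = Some y -> (mul (iv s) (mul s x) = x /\ x <> z) /\ y = mul s x).
  { intros s x y H. unfold psi in H. destruct (excluded_middle_informative _) as [h|h];
    inversion H; auto. }
  clearbody psi.
  assert (Pz : forall x, psi z x = None).
  { intro x. apply Pnone. intros [H1 H2]. rewrite (proj1 (HZ x)), (proj2 (HZ (iv z))) in H1. auto. }
  assert (Pself : forall s, s <> z -> psi s (mul (iv s) s) = Some s).
  { intros s Hs. transitivity (Some (mul s (mul (iv s) s))); [apply Psome|rewrite R1; reflexivity].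
    - rewrite (HA s (iv s) s), HA, R2. reflexivity.
    - intro H. apply Hs. rewrite <- (R1 s), H. apply HZ. }
  assert (Grad : forall s, in_graded_component op degS (degS s) (psi s)).
  { intro s. split.
    - intros x x' y H1 H2. apply Pinv in H1. apply Pinv in H2.
      destruct H1 as [[H1 _] ->]. destruct H2 as [[H2 _] E].
      rewrite <- H1, <- H2, E. reflexivity.
    - intros x y H. apply Pinv in H. destruct H as [[H1 H2] ->].
      pose proof (nz s x H1 H2) as H3.
      apply Hdeg; auto. intro Hs; subst s. apply H3. apply HZ. }
  exists S, degS, psi. split; [exact (inhabits z)|]. split; [intro s; exists (degS s); apply Grad|].
  split.
  { intros s t. apply functional_extensionality. intro x. unfold pcomp.
    destruct (excluded_middle_informative (mul (iv t) (mul t x) = x /\ x <> z)) as [[Ht Hx]|Ht].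
    - rewrite (Psome t x Ht Hx).
      pose proof (nz t x Ht Hx) as Htx.
      destruct (excluded_middle_informative (mul (iv s) (mul s (mul t x)) = mul t x)) as [Hs|Hs].
      + rewrite (Psome s _ Hs Htx). rewrite HA. apply Psome; auto.
        rewrite ivmul. rewrite <- !HA. rewrite Hs. exact Ht.
      + rewrite Pnone. rewrite Pnone; auto. tauto.
        intros [H1 _]. apply Hs. rewrite ivmul in H1. rewrite <- !HA in H1.
        rewrite <- H1 at 2. rewrite (CN t (iv t) (iv s) s (P2 t) (P1 s)). rewrite R1X. reflexivity.
    - rewrite (Pnone t x Ht). apply Pnone. intros [H1 H2]. apply Ht. split; auto.
      rewrite ivmul in H1. rewrite <- !HA in H1. rewrite <- H1 at 1. rewrite R2X. exact H1. }
  split.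
  { intros s t E.
    destruct (excluded_middle_informative (s = z)) as [Hs|Hs];
    destruct (excluded_middle_informative (t = z)) as [Ht|Ht].
    - congruence.
    - exfalso. pose proof (Pself t Ht) as H. rewrite <- E, Hs, Pz in H. discriminate.
    - exfalso. pose proof (Pself s Hs) as H. rewrite E, Ht, Pz in H. discriminate.
    - pose proof (Pself s Hs) as H1. rewrite E in H1. apply Pinv in H1. destruct H1 as [_ H1].
      pose proof (Pself t Ht) as H2. rewrite <- E in H2. apply Pinv in H2. destruct H2 as [_ H2].
      (* H1 : s = t (s* s), H2 : t = s (t* t) *)
      pose proof (idem_comm _ _ _ HA R1 R2 U _ _ (P1 t) (P1 s)) as C.
      transitivity (mul t (mul (iv s) s)); [exact H1|].
      transitivity (mul (mul t (mul (iv t) t)) (mul (iv s) s)); [rewrite R1; reflexivity|].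
      transitivity (mul t (mul (mul (iv t) t) (mul (iv s) s))); [rewrite <- !HA; reflexivity|].
      rewrite C. transitivity (mul (mul t (mul (iv s) s)) (mul (iv t) t)); [rewrite <- !HA; reflexivity|].
      rewrite <- H1. symmetry; exact H2. }
  intros a s [Hs | [Hs Ha]].
  - subst s. split.
    + intros x x' y H. rewrite Pz in H. discriminate.
    + intros x y H. rewrite Pz in H. discriminate.
  - rewrite <- Ha. apply Grad.
Qed.
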